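(* For any integer $k\ge2$: (a) The set $\{a\in[\frac12,\frac23]:\varkappa_a\ge k\}$ is a finite union of closed non-degenerate intervals. On each of these intervals the functions $a\mapsto T_a^1(0),\dots,a\mapsto T_a^k(0)$ are strictly decreasing and continuous, and $a\mapsto\delta_1,\dots,a\mapsto\delta_{k-1}$ are constant. (b) The set $\{a\in[\frac12,\frac23]:\varkappa_a=k\}$ is the union of all (pairwise disjoint) open intervals $(a'',a')$ such that $T_{a''}^k(0)=1$ and $T_{a'}^k(0)=\frac{2a'-1}{1-a'}$.
   Context: For $a\in[\frac12,\frac23]$ let $I_a=\big(\frac{2a-1}{1-a},1\big)$ and define $T_a$ on $[0,\frac1{1-a}]\setminus I_a$ by $T_a(x)=\frac1a(x+1)$ for $0\le x\le\frac{2a-1}{1-a}$ and $T_a(x)=\frac1a(x-1)$ for $1\le x\le\frac1{1-a}$; for $a=\frac23$ set $T_{2/3}(1)=0$. Let $\varkappa_a=\inf\{k\ge0:T_a^k(0)\in I_a\}$ ($\inf\emptyset=\infty$) and, for $0\le k\le\varkappa_a$, $\delta_k=\delta_k(a)=\mathbb 1\{T_a^k(0)<1\}$. *)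

(* Defs.v *)
From HB Require Import structures.
From mathcomp Require Import all_boot all_order all_algebra.
From mathcomp Require Import all_classical all_reals all_analysis.
Set Implicit Arguments. Unset Strict Implicit. Unset Printing Implicit Defensive.
Import Order.TTheory GRing.Theory Num.Theory.
Local Open Scope ring_scope.

Definition param_ok {R : realType} (a : R) : Prop := 1/2 <= a <= 2/3.

Definition inI {R : realType} (a x : R) : Prop := (2*a - 1)/(1 - a) < x < 1.

(* T_a, extended to a total function on R.  On the domain
   [0, 1/(1-a)] \ I_a it agrees with the paper's T_a:
   x < 1 (i.e. x ∈ [0,(2a-1)/(1-a)]) gives (x+1)/a, x >= 1 gives (x-1)/a;
   in particular T_{2/3}(1) = 0. Values on I_a are never used, since the
   orbit is only considered up to the first hitting time of I_a. *)
Definition Tmap {R : realType} (a x : R) : R :=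
  if x < 1 then (x + 1) / a else (x - 1) / a.

Definition orb {R : realType} (a : R) (k : nat) : R := iter k (Tmap a) 0.

(* varkappa_a >= k, i.e. T_a^j(0) ∉ I_a for all j < k
   (this is exactly inf{j : T_a^j(0) ∈ I_a} >= k, with inf ∅ = ∞). *)
Definition kappa_ge {R : realType} (a : R) (k : nat) : Prop :=
  forall j, (j < k)%N -> ~ inI a (orb a j).

Definition kappa_eq {R : realType} (a : R) (k : nat) : Prop :=
  kappa_ge a k /\ inI a (orb a k).

Definition delta {R : realType} (a : R) (j : nat) : bool := orb a j < 1.

Definition good_pair {R : realType} (k : nat) (p q : R) : Prop :=
  [/\ p < q,
      (forall a, p <= a <= q -> param_ok a /\ kappa_ge a k),
      orb p k = 1 &
      orb q k = (2*q - 1)/(1 - q)].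

(* Main.v *)
Require Import Defs.
From HB Require Import structures.
From mathcomp Require Import all_boot all_order all_algebra.
From mathcomp Require Import all_classical all_reals all_analysis.
From mathcomp Require Import lra ring.
Import Order.TTheory GRing.Theory Num.Theory.
Import numFieldNormedType.Exports.
Local Open Scope ring_scope.
Local Open Scope classical_set_scope.
Set Implicit Arguments. Unset Strict Implicit. Unset Printing Implicit Defensive.

Section Aux.
Variable R : realType.
Implicit Types a x y : R.

Definition gg a : R := (2*a - 1)/(1 - a).
Definition PP (k : nat) a := param_ok a /\ kappa_ge a k.

Lemma par_pos a : param_ok a -> 0 < a /\ 0 < 1 - a.
Proof. by move=> /andP[h1 h2]; split; lra. Qed.

Lemma g_lt1 a : param_ok a -> (gg a < 1) = (a < 2/3).
Proof.
move=> pa; have [_ h] := par_pos pa; rewrite /gg ltr_pdivrMr // mul1r.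
apply/idP/idP => H; lra.
Qed.

Lemma g_le1 a : param_ok a -> gg a <= 1.
Proof.
move=> pa; have [_ h] := par_pos pa; move: pa => /andP[h1 h2].
rewrite /gg ler_pdivrMr // mul1r; lra.
Qed.

Lemma g_ge0 a : param_ok a -> 0 <= gg a.
Proof.
move=> pa; have [_ h] := par_pos pa; move: pa => /andP[h1 h2].
rewrite /gg; apply: divr_ge0; lra.
Qed.

Lemma g_inc x y : param_ok x -> param_ok y -> x < y -> gg x < gg y.
Proof.
move=> px py xy; have [_ hx] := par_pos px; have [_ hy] := par_pos py.
rewrite /gg ltr_pdivrMr // mulrAC ltr_pdivlMr //; nra.
Qed.

Lemma g_le x y : param_ok x -> param_ok y -> x <= y -> gg x <= gg y.
Proof.
move=> px py; rewrite le_eqVlt => /orP[/eqP->//|h]; exact/ltW/g_inc.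
Qed.

Lemma g_23 a : param_ok a -> ~ (a < 2/3) -> gg a = 1.
Proof.
move=> pa h; apply/le_anti; rewrite g_le1 //=; rewrite leNgt g_lt1 //; exact/negP.
Qed.

Lemma g_cont a : param_ok a -> {for a, continuous gg}.
Proof.
move=> pa; have [ha h] := par_pos pa.
apply: continuousM. apply: continuousD. apply: continuousM. exact: cvg_cst. exact: cvg_id.
exact: cvg_cst.
apply: continuousV; first by rewrite gt_eqF.
apply: continuousD. exact: cvg_cst. apply: continuousN. exact: cvg_id.
Qed.

Lemma inv_gt1 a : param_ok a -> 1 < 1/(1-a).
Proof. move=> pa; have [ha h] := par_pos pa; move: pa => /andP[h1 h2].
rewrite ltr_pdivlMr //; lra. Qed.

Lemma T_g a : param_ok a -> a < 2/3 -> Tmap a (gg a) = 1/(1-a).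
Proof.
move=> pa h; have [ha h'] := par_pos pa.
rewrite /Tmap (_ : gg a < 1); last by rewrite g_lt1.
rewrite /gg; field; rewrite ?gt_eqF //; apply/andP; split; rewrite gt_eqF //.
Qed.

Lemma T_fix a : param_ok a -> Tmap a (1/(1-a)) = 1/(1-a).
Proof.
move=> pa; have [ha h'] := par_pos pa.
rewrite /Tmap ltNge (ltW (inv_gt1 pa)) /=.
field; apply/andP; split; rewrite gt_eqF //.
Qed.

Lemma T_1 a : Tmap a 1 = 0.
Proof. by rewrite /Tmap ltxx subrr mul0r. Qed.

Lemma orbS a k : orb a k.+1 = Tmap a (orb a k).
Proof. by rewrite /orb iterS. Qed.

Lemma orb0 a : orb a 0 = 0.
Proof. by []. Qed.

Lemma orb_ge0 a k : 0 < a -> 0 <= orb a k.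
Proof.
move=> ha; elim: k => [|k IH]; first by rewrite orb0.
rewrite orbS /Tmap; case: ifP => h.
  apply: divr_ge0; lra.
apply: divr_ge0; last lra. move/negbT: h; rewrite -leNgt; lra.
Qed.

Lemma orb_period a p n : orb a p = 0 -> orb a (n + p) = orb a n.
Proof. by move=> h; rewrite /orb iterD; rewrite /orb in h; rewrite h. Qed.

Lemma orb_mulp a p t : orb a p = 0 -> orb a (t * p) = 0.
Proof.
move=> h; elim: t => [|t IH]; first by rewrite mul0n.
by rewrite mulSn addnC orb_period.
Qed.

Lemma orb_mod a p k : orb a p = 0 -> orb a k = orb a (k %% p)%N.
Proof.
move=> h; transitivity (orb a ((k %/ p) * p + k %% p)%N); first by rewrite -div.divn_eq.
rewrite addnC.
elim: (k %/ p)%N => [|t IH]; first by rewrite mul0n addn0.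
by rewrite mulSnr addnA orb_period.
Qed.

Lemma orb_fix a m n : param_ok a -> orb a m = 1/(1-a) -> orb a (n + m) = 1/(1-a).
Proof.
move=> pa h; elim: n => [|n IH]; first by rewrite add0n.
by rewrite addSn orbS IH T_fix.
Qed.

Lemma NB a p m : param_ok a -> (0 < p)%N -> orb a p = 0 -> orb a m = gg a -> a < 2/3 -> False.
Proof.
move=> pa p0 hp hm h23.
have h1 : orb a m.+1 = 1/(1-a) by rewrite orbS hm T_g.
have h2 := orb_fix (m.+1 * p - m.+1) pa h1.
rewrite subnK in h2; last by rewrite leq_pmulr.
rewrite orb_mulp // in h2.
have := inv_gt1 pa; rewrite -h2; lra.
Qed.

Lemma notIP a x : ~ inI a x <-> (x <= gg a \/ 1 <= x).
Proof.
rewrite /inI -/(gg a); split.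
  move=> H; case: (leP x (gg a)) => h; first by left.
  right; rewrite leNgt; apply/negP => h2; apply: H; by rewrite h h2.
by case=> h /andP[h1 h2]; lra.
Qed.

Lemma kappa_geS a k : kappa_ge a k.+1 <-> kappa_ge a k /\ ~ inI a (orb a k).
Proof.
split.
  move=> H; split; last exact: H.
  by move=> j hj; apply: H; rewrite ltnS ltnW.
move=> [H1 H2] j; rewrite ltnS leq_eqVlt => /orP[/eqP->//|]; exact: H1.
Qed.

End Aux.

Section GLs.
Variable R : realType.
Implicit Types a x y p q : R.

Lemma Dconst k p q j (phi : R -> R) :
  (forall a, p <= a <= q -> PP k a) -> (j < k)%N ->
  (forall x, 0 < x -> {for x, continuous phi}) ->
  (forall a, p <= a <= q -> orb a j = phi a) ->
  (forall x y, p <= x -> x <= y -> y <= q -> orb y j <= orb x j) ->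
  forall x y, p <= x <= q -> p <= y <= q -> delta x j = delta y j.
Proof.
move=> HP jk Hc He Hm.
have D1 : forall x y, p <= x -> x <= y -> y <= q -> delta x j = false -> delta y j = true -> False.
  move=> x y px xy yq dx dy.
  have hx : p <= x <= q by rewrite px (le_trans xy yq).
  have hy : p <= y <= q by rewrite yq (le_trans px xy).
  have [pxx kx] := HP x hx; have [pyy ky] := HP y hy.
  rewrite /delta in dx dy; move/negbT: dx; rewrite -leNgt => ox.
  have oy : orb y j <= gg y.
    by case: ((notIP _ _).1 (ky j jk)) => // h; move: dy; rewrite ltNge h.
  have x23 : x < 2/3.
    case: (ltP x (2/3)) => // hx23.
    have exy : x = y by move: pyy => /andP[_ h2]; apply/le_anti; rewrite xy /=; lra.
    by move: dy; rewrite -exy ltNge ox.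
  pose h := fun a => phi a - (1 + gg a)/2.
  have hc : {within `[x,y], continuous h}.
    apply: continuous_in_subspaceT => a; rewrite inE /= in_itv /= => /andP[h1 h2].
    have ha : p <= a <= q by rewrite (le_trans px h1) (le_trans h2 yq).
    have [pa _] := HP a ha; have [a0 _] := par_pos pa.
    rewrite /h; apply: cvgD; first exact: Hc.
    apply: cvgN; apply: cvgM; last exact: cvg_cst.
    apply: cvgD; first exact: cvg_cst. exact: g_cont.
  have gx : gg x < 1 by rewrite g_lt1.
  have hx0 : 0 < h x by rewrite /h -He //; lra.
  have hy0 : h y <= 0 by rewrite /h -He //; have := g_le1 pyy; lra.
  have hv : Num.min (h x) (h y) <= 0 <= Num.max (h x) (h y).
    by rewrite ge_min le_max hy0 (ltW hx0) orbT.
  have [c cin hc0] := IVT xy hc hv.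
  rewrite in_itv /= in cin; case/andP: cin => c1 c2.
  have hcc : p <= c <= q by rewrite (le_trans px c1) (le_trans c2 yq).
  have [pc kc] := HP c hcc.
  have oc : orb c j = (1 + gg c)/2 by rewrite He //; move: hc0; rewrite /h; lra.
  case: (ltP c (2/3)) => hc23.
    have gc : gg c < 1 by rewrite g_lt1.
    apply: (kc j jk); rewrite /inI -/(gg c) oc; apply/andP; split; lra.
  have ecy : c = y by move: pyy => /andP[_ h2]; move: pc => /andP[_ h3]; apply/le_anti; rewrite c2 /=; lra.
  have g1 : gg c = 1 by apply: g_23 => //; rewrite ltNge hc23.
  by move: dy; rewrite -ecy oc g1; lra.
have D2 : forall x y, p <= x -> x <= y -> y <= q -> delta x j = delta y j.
  move=> x y px xy yq.
  case Ex: (delta x j); case Ey: (delta y j) => //; last by case: (D1 x y px xy yq Ex Ey).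
  have := Hm x y px xy yq; move: Ex Ey; rewrite /delta => Ex /negbT; rewrite -leNgt; lra.
move=> x y /andP[px xq] /andP[py yq]; case: (leP x y) => xy.
  exact: D2.
by symmetry; apply: D2 => //; exact: ltW.
Qed.


Lemma GL k p q : (forall a, p <= a <= q -> PP k a) -> forall j, (j <= k)%N ->
  (exists phi : R -> R, (forall x, 0 < x -> {for x, continuous phi}) /\
      (forall a, p <= a <= q -> orb a j = phi a)) /\
  (forall x y, p <= x -> x <= y -> y <= q -> orb y j <= orb x j) /\
  ((0 < j)%N -> forall x y, p <= x -> x < y -> y <= q -> orb y j < orb x j).
Proof.
move=> HP; elim => [_|j IH jk].
  split; first by exists (fun _ => 0); split => // x _; exact: cvg_cst.
  by split => // *; rewrite !orb0.
have [[phi [Hc He]] [Hm Hs]] := IH (ltnW jk).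
have Dc := Dconst HP jk Hc He Hm.
case: (lerP p q) => pq; last first.
  split; first by exists (fun _ => 0); split => [x _|a /andP[h1 h2]]; [exact: cvg_cst|lra].
  by split => [x y h1 h2 h3|_ x y h1 h2 h3]; lra.
have [c Hd] : exists c, forall a, p <= a <= q -> delta a j = c.
  by exists (delta p j) => a ha; apply: Dc => //; rewrite lexx pq.
have HT : forall a, p <= a <= q -> orb a j.+1 = (orb a j + (if c then 1 else -1)) / a.
  move=> a ha; rewrite orbS /Tmap; have := Hd a ha; rewrite /delta => ->; by case: c {Hd}.
have key : forall x y, p <= x -> x <= y -> y <= q ->
    orb y j.+1 <= orb x j.+1 /\ (x < y -> orb y j.+1 < orb x j.+1).
  move=> x y px xy yq.
  have hx : p <= x <= q by rewrite px (le_trans xy yq).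
  have hy : p <= y <= q by rewrite yq (le_trans px xy).
  have [pxx _] := HP x hx; have [x0 _] := par_pos pxx.
  have y0 : 0 < y by lra.
  rewrite !HT //.
  have ox0 := orb_ge0 j x0; have oy0 := orb_ge0 j y0.
  have mxy := Hm x y px xy yq.
  have dx := Hd x hx; have dy := Hd y hy; rewrite /delta in dx dy.
  case: c {HT Hd} dx dy => dx dy.
    split; first by rewrite ler_pdivrMr // mulrAC ler_pdivlMr //; nra.
    by move=> xy'; rewrite ltr_pdivrMr // mulrAC ltr_pdivlMr //; nra.
  have j0 : (0 < j)%N.
    by rewrite lt0n; apply/eqP => j0; move: dy; rewrite j0 orb0 ltr01.
  move/negbT: dy; rewrite -leNgt => dy; move/negbT: dx; rewrite -leNgt => dx.
  split; first by rewrite ler_pdivrMr // mulrAC ler_pdivlMr //; nra.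
  move=> xy'; have := Hs j0 x y px xy' yq => sxy.
  by rewrite ltr_pdivrMr // mulrAC ltr_pdivlMr //; nra.
split.
  exists (fun a => (phi a + (if c then 1 else -1)) / a); split.
    move=> x x0; apply: cvgM; first by apply: cvgD; [exact: Hc|exact: cvg_cst].
    by apply: cvgV; [rewrite gt_eqF|exact: cvg_id].
  by move=> a ha; rewrite HT // He.
split; first by move=> x y px xy yq; exact: (key x y px xy yq).1.
by move=> _ x y px xy yq; exact: (key x y px (ltW xy) yq).2.
Qed.

End GLs.

Section Cov.
Variable R : realType.
Implicit Types a x y p q l r : R.

Definition InvI k (i : R * R) := [/\ i.1 < i.2, orb i.1 k = 1/(1-i.1) &
  (i.2 = 2/3 \/ exists p : nat, (0 < p <= k)%N /\ orb i.2 p = 0)].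

Lemma cont_itv (f : R -> R) x y : (forall a, x <= a <= y -> {for a, continuous f}) ->
  {within `[x,y], continuous f}.
Proof.
move=> H; apply: continuous_in_subspaceT => a; rewrite inE /= in_itv /= => ha.
exact: H.
Qed.

Lemma CaseB k l r : (0 < k)%N -> l < r -> (forall a, l <= a <= r -> PP k a) ->
  orb l k = 1/(1-l) -> (r = 2/3 \/ exists p : nat, (0 < p <= k)%N /\ orb r p = 0) ->
  orb r k < 1 ->
  exists a1 a2, [/\ l < a1, a1 < a2, a2 < r, orb a1 k = 1 & orb a2 k = gg a2].
Proof.
move=> k0 lr HP Il Ir rk.
have [[phi [Hc He]] [Hm Hs]] := GL HP (leqnn k).
have hl : l <= l <= r by rewrite lexx ltW.
have hr : l <= r <= r by rewrite lexx ltW.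
have [pl _] := HP l hl; have [pr kr] := HP r hr.
have ol := inv_gt1 pl.
have rg : orb r k < gg r.
  case: (ltP r (2/3)) => h23; last first.
    by rewrite g_23 // ltNge h23.
  case: Ir => [r23|[p [/andP[p0 pk] hp]]]; first by move: h23; rewrite r23 ltxx.
  have hm := orb_mod k hp.
  have km : (k %% p < k)%N by apply: leq_trans (ltn_pmod _ p0) pk.
  have := (notIP _ _).1 (kr _ km); rewrite -hm => -[h|h]; last lra.
  rewrite lt_neqAle h andbT; apply/eqP => e; exact: (NB pr p0 hp e h23).
have cphi : {within `[l,r], continuous phi}.
  apply: cont_itv => a ha; have [pa _] := HP a ha; have [a0 _] := par_pos pa.
  exact: Hc.
have hv : Num.min (phi l) (phi r) <= 1 <= Num.max (phi l) (phi r).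
  by rewrite -!He // ge_min le_max (ltW rk) Il (ltW ol) orbT.
have [c1 c1in e1] := IVT (ltW lr) cphi hv.
rewrite in_itv /= in c1in; case/andP: c1in => lc1 c1r.
have hc1 : l <= c1 <= r by rewrite lc1 c1r.
rewrite -He // in e1.
have lc1' : l < c1.
  rewrite lt_neqAle lc1 andbT; apply/eqP => e; move: e1; rewrite -e Il; lra.
have c1r' : c1 < r.
  rewrite lt_neqAle c1r andbT; apply/eqP => e; move: e1; rewrite e; lra.
have [pc1 _] := HP c1 hc1.
have gc1 : gg c1 < 1.
  rewrite g_lt1 //; move: pr => /andP[_ h]; lra.
pose h := fun a => phi a - gg a.
have ch : {within `[c1,r], continuous h}.
  apply: cont_itv => a /andP[ha1 ha2].
  have ha : l <= a <= r by rewrite ha2 (le_trans lc1 ha1).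
  have [pa _] := HP a ha; have [a0 _] := par_pos pa.
  rewrite /h; apply: cvgD; first exact: Hc.
  apply: cvgN; exact: g_cont.
have hv2 : Num.min (h c1) (h r) <= 0 <= Num.max (h c1) (h r).
  rewrite /h -!He // e1 ge_min le_max; apply/andP; split; apply/orP; [right|left]; lra.
have [c2 c2in e2] := IVT c1r ch hv2.
rewrite in_itv /= in c2in; case/andP: c2in => c12 c2r.
have hc2 : l <= c2 <= r by rewrite c2r (le_trans lc1 c12).
have o2 : orb c2 k = gg c2 by move: e2; rewrite /h -He //; lra.
exists c1, c2; split => //.
  rewrite lt_neqAle c12 andbT; apply/eqP => e; move: o2; rewrite -e e1; lra.
rewrite lt_neqAle c2r andbT; apply/eqP => e; move: o2; rewrite e; lra.
Qed.

Lemma SplitI k l r : (0 < k)%N -> InvI k (l, r) -> (forall a, l <= a <= r -> PP k a) ->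
  exists L : seq (R * R),
    (forall a, (l <= a <= r /\ ~ inI a (orb a k)) <-> exists2 i, i \in L & i.1 <= a <= i.2) /\
    (forall i, i \in L -> InvI k.+1 i).
Proof.
move=> k0 [/= lr Il Ir] HP.
have [[phi [Hc He]] [Hm Hs]] := GL HP (leqnn k).
have hl : l <= l <= r by rewrite lexx ltW.
have hr : l <= r <= r by rewrite lexx ltW.
have [pl _] := HP l hl; have [pr kr] := HP r hr.
have Il' : orb l k.+1 = 1/(1-l) by rewrite orbS Il T_fix.
have Ir' : r = 2/3 \/ exists p : nat, (0 < p <= k.+1)%N /\ orb r p = 0.
  case: Ir => [->|[p [/andP[p0 pk] hp]]]; [by left|right; exists p].
  by rewrite p0 hp (leq_trans pk) ?leqnSn.
case: (ltP (orb r k) 1) => rk; last first.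
  exists [:: (l, r)]; split; last by move=> i; rewrite inE => /eqP ->; split.
  move=> a; split.
    by move=> [ha _]; exists (l, r); rewrite ?inE.
  move=> [i]; rewrite inE => /eqP -> /= ha; split => //.
  apply/notIP; right; case/andP: ha => h1 h2; have := Hm a r h1 h2 (lexx r); lra.
have [a1 [a2 [la1 a12 a2r o1 o2]]] := CaseB k0 lr HP Il Ir rk.
have ha2 : l <= a2 <= r by rewrite (ltW a2r) (ltW (lt_trans la1 a12)).
have ha1 : l <= a1 <= r by rewrite (ltW la1) (ltW (lt_trans a12 a2r)).
have [pa2 _] := HP a2 ha2.
have a23 : a2 < 2/3 by move: pr => /andP[_ h]; lra.
exists [:: (l, a1); (a2, r)]; split; last first.
  move=> i; rewrite !inE => /orP[/eqP->|/eqP->]; split => //=.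
    by right; exists k.+1; rewrite ltn0Sn leqnn orbS o1 T_1.
  by rewrite ?orbS o2 T_g.
move=> a; split.
  move=> [/andP[al ar] hI]; have [pa _] := HP a (introT andP (conj al ar)).
  case/notIP: hI => h.
    exists (a2, r); first by rewrite !inE eqxx orbT.
    rewrite /= ar andbT; case: (leP a2 a) => // h'.
    have := Hs k0 a a2 al h' (ltW a2r); have := g_inc pa pa2 h'; lra.
  exists (l, a1); first by rewrite !inE eqxx.
  rewrite /= al /=; case: (leP a a1) => // h'.
  have := Hs k0 a1 a (ltW la1) h' ar; lra.
move=> [i]; rewrite !inE => /orP[/eqP->|/eqP->] /= /andP[h1 h2].
  split; first by rewrite h1 (le_trans h2 (ltW (lt_trans a12 a2r))).
  apply/notIP; right; have := Hm a a1 h1 h2 (ltW (lt_trans a12 a2r)); lra.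
have hla : l <= a by apply: le_trans h1; case/andP: ha2.
split; first by rewrite hla h2.
have [pa _] := HP a (introT andP (conj hla h2)).
apply/notIP; left; have := Hm a2 a (ltW (lt_trans la1 a12)) h1 h2.
have := g_le pa2 pa h1; lra.
Qed.

End Cov.

Section Cov2.
Variable R : realType.
Implicit Types a x y p q l r : R.

Lemma Cover k : (0 < k)%N -> exists s : seq (R * R),
  (forall a, PP k a <-> exists2 i, i \in s & i.1 <= a <= i.2) /\
  (forall i, i \in s -> InvI k i).
Proof.
elim: k => [//|k IH] _.
case: (posnP k) => [->|k0].
  exists [:: (1/2, 2/3)]; split.
    move=> a; split.
      by move=> [pa _]; exists (1/2, 2/3); rewrite ?inE.
    move=> [i]; rewrite inE => /eqP -> /= pa; split => //.
    move=> j; rewrite ltnS leqn0 => /eqP ->; rewrite orb0 /inI.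
    have := g_ge0 pa; rewrite /gg => h /andP[h1 _]; lra.
  move=> i; rewrite inE => /eqP ->; split => /=; first lra.
    rewrite /orb /= /Tmap ltr01 add0r; by field.
  by left.
have [s [Hs Hinv]] := IH k0.
have gen : forall s0 : seq (R * R),
    (forall i, i \in s0 -> InvI k i /\ forall a, i.1 <= a <= i.2 -> PP k a) ->
    exists s' : seq (R * R), (forall a, (exists2 i, i \in s0 & i.1 <= a <= i.2 /\ ~ inI a (orb a k)) <->
                 exists2 i, i \in s' & i.1 <= a <= i.2) /\
               forall i, i \in s' -> InvI k.+1 i.
  move=> s0; elim: s0 => [|i s0 IHs] H.
    by exists [::]; split => // a; split; case=> ?; rewrite in_nil.
  have [Ii Pi] := H i (mem_head _ _).
  have H' : forall j, j \in s0 -> InvI k j /\ forall a, j.1 <= a <= j.2 -> PP k a.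
    by move=> j hj; apply: H; rewrite inE hj orbT.
  have [s' [C' I']] := IHs H'.
  move: Ii Pi; case: i {H} => l r Ii Pi.
  have [L [CL IL]] := SplitI k0 Ii Pi.
  exists (L ++ s'); split; last first.
    by move=> i'; rewrite mem_cat => /orP[]; [exact: IL|exact: I'].
  move=> a; split.
    move=> [j]; rewrite inE => /orP[/eqP-> [ha hI]|hj ha].
      have [i' hi' hai'] := (CL a).1 (conj ha hI).
      by exists i'; rewrite ?mem_cat ?hi'.
    have [i' hi' hai'] := (C' a).1 (ex_intro2 _ _ j hj ha).
    by exists i'; rewrite ?mem_cat ?hi' ?orbT.
  move=> [i']; rewrite mem_cat => /orP[hi'|hi'] hai.
    have [hlr hI] := (CL a).2 (ex_intro2 _ _ i' hi' hai).
    by exists (l, r); rewrite ?inE ?eqxx.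
  have [j hj hja] := (C' a).2 (ex_intro2 _ _ i' hi' hai).
  by exists j; rewrite ?inE ?hj ?orbT.
have [s' [C I]] := gen s (fun i hi => conj (Hinv i hi) (fun a ha => (Hs a).2 (ex_intro2 _ _ i hi ha))).
exists s'; split => // a; split.
  move=> [pa /kappa_geS [kk hI]].
  have [i hi ha] := (Hs a).1 (conj pa kk).
  exact: (C a).1 (ex_intro2 _ _ i hi (conj ha hI)).
move=> /(C a).2 [i hi [ha hI]].
have [pa kk] := (Hs a).2 (ex_intro2 _ _ i hi ha).
by split => //; apply/kappa_geS.
Qed.

End Cov2.
Unset Implicit Arguments.

Theorem lemma5p1 (R : realType) (k : nat) : (2 <= k)%N ->
  (exists s : seq (R * R),
     (forall i, i \in s -> i.1 < i.2) /\
     (forall a : R, (param_ok a /\ kappa_ge a k) <->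
        exists2 i, i \in s & i.1 <= a <= i.2) /\
     (forall i, i \in s ->
        (forall j, (1 <= j <= k)%N ->
           {within `[i.1, i.2], continuous (fun a : R => orb a j)} /\
           (forall x y : R, i.1 <= x -> x < y -> y <= i.2 -> orb y j < orb x j)) /\
        (forall j, (1 <= j < k)%N -> forall x y : R,
           i.1 <= x <= i.2 -> i.1 <= y <= i.2 -> delta x j = delta y j)))
  /\
  ((forall a : R, (param_ok a /\ kappa_eq a k) <->
       exists p q : R, good_pair k p q /\ p < a < q) /\
   (forall p1 q1 p2 q2 : R, good_pair k p1 q1 -> good_pair k p2 q2 ->
       (p1, q1) <> (p2, q2) -> forall a : R, ~ (p1 < a < q1 /\ p2 < a < q2))).
Proof.
move=> k2; have k0 : (0 < k)%N by apply: leq_trans k2.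
have [s [Hs Hinv]] := Cover R k0.
split.
  exists s; split; first by move=> i /Hinv [].
  split; first exact: Hs.
  move=> i hi.
  have HP : forall a, i.1 <= a <= i.2 -> PP k a.
    by move=> a ha; apply: (Hs a).2; exists i.
  split.
    move=> j /andP[j1 jk]; have [[phi [Hc He]] [Hm Hst]] := GL HP jk.
    split; last by move=> x y h1 h2 h3; apply: Hst.
    apply: (@subspace_eq_continuous _ _ _ phi).
      by move=> a; rewrite inE /= in_itv /= => ha; rewrite -He.
    apply: cont_itv => a ha; have [pa _] := HP a ha; have [a0 _] := par_pos pa.
    exact: Hc.
  move=> j /andP[j1 jk] x y hx hy.
  have [[phi [Hc He]] [Hm Hst]] := GL HP (ltnW jk).
  exact: (Dconst HP jk Hc He Hm).
split.
  move=> a; split.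
    move=> [pa [kk hI]].
    have [[l r] hi ha] := (Hs a).1 (conj pa kk).
    have [/= lr Il Ir] := Hinv _ hi.
    have HP : forall b, l <= b <= r -> PP k b.
      by move=> b hb; apply: (Hs b).2; exists (l, r).
    have [[phi [Hc He]] [Hm Hst]] := GL HP (leqnn k).
    case/andP: ha => /= al ar.
    move: hI; rewrite /inI -/(gg a) => /andP[hI1 hI2].
    have rk : orb r k < 1 by have := Hm a r al ar (lexx r); lra.
    have [a1 [a2 [la1 a12 a2r o1 o2]]] := CaseB k0 lr HP Il Ir rk.
    have [pa2 _] := HP a2 (introT andP (conj (ltW (lt_trans la1 a12)) (ltW a2r))).
    exists a1, a2; split.
      split => // b /andP[b1 b2]; apply: HP.
      by rewrite (le_trans (ltW la1) b1) (le_trans b2 (ltW a2r)).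
    apply/andP; split.
      case: (leP a a1) => // h; have := Hm a a1 al h (ltW (lt_trans a12 a2r)); lra.
    case: (leP a2 a) => // h.
    have := Hm a2 a (ltW (lt_trans la1 a12)) h ar; have := g_le pa2 pa h; lra.
  move=> [p [q [[pq Hpq op oq] /andP[pa aq]]]].
  have [pa' kk] := Hpq a (introT andP (conj (ltW pa) (ltW aq))).
  split => //; split => //.
  have [[phi [Hc He]] [Hm Hst]] := GL Hpq (leqnn k).
  have h1 := Hst k0 p a (lexx p) pa (ltW aq).
  have h2 := Hst k0 a q (ltW pa) aq (lexx q).
  have [pq' _] := Hpq q (introT andP (conj (ltW pq) (lexx q))).
  have h3 := g_inc pa' pq' aq.
  have oq' : orb q k = gg q := oq.
  rewrite /inI -/(gg a); apply/andP; split; lra.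
move=> p1 q1 p2 q2 [pq1 H1 o1 o1'] [pq2 H2 o2 o2'] ne a [/andP[h1 h2] /andP[h3 h4]].
pose lo := Num.min p1 p2; pose hi := Num.max q1 q2.
have HP : forall b, lo <= b <= hi -> PP k b.
  move=> b /andP[hb1 hb2]; case: (leP b a) => hba.
    move: hb1; rewrite ge_min => /orP[hb|hb]; [apply: H1|apply: H2]; rewrite hb /=; lra.
  move: hb2; rewrite le_max => /orP[hb|hb]; [apply: H1|apply: H2]; rewrite hb andbT; lra.
have [[phi [Hc He]] [Hm Hst]] := GL HP (leqnn k).
have lp1 : lo <= p1 by rewrite ge_min lexx.
have lp2 : lo <= p2 by rewrite ge_min lexx orbT.
have qh1 : q1 <= hi by rewrite le_max lexx.
have qh2 : q2 <= hi by rewrite le_max lexx orbT.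
have ep : p1 = p2.
  case: (ltgtP p1 p2) => // h.
    have := Hst k0 p1 p2 lp1 h (le_trans (ltW (lt_trans h3 h4)) qh2); lra.
  have := Hst k0 p2 p1 lp2 h (le_trans (ltW (lt_trans h1 h2)) qh1); lra.
have [pq1' _] := H1 q1 (introT andP (conj (ltW pq1) (lexx q1))).
have [pq2' _] := H2 q2 (introT andP (conj (ltW pq2) (lexx q2))).
have eq : q1 = q2.
  case: (ltgtP q1 q2) => // h.
    have := Hst k0 q1 q2 (le_trans lp1 (ltW pq1)) h qh2; have := g_inc pq1' pq2' h.
    have e1 : orb q1 k = gg q1 := o1'; have e2 : orb q2 k = gg q2 := o2'; lra.
  have := Hst k0 q2 q1 (le_trans lp2 (ltW pq2)) h qh1; have := g_inc pq2' pq1' h.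
  rewrite /gg in o1' o2' *; lra.
by apply: ne; rewrite ep eq.
Qed.
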